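(* Let $E$ be a graph, $K$ a field, $c=e_1e_2\cdots e_m$ an exclusive cycle in $E$, and $\mu=c^\infty$. Let $f(x)=1+a_1x+\dots+a_nx^n$ ($n\ge 1$, $a_i\in K$) be an irreducible polynomial in $K[x,x^{-1}]$ and $K'=K[x,x^{-1}]/(f(x))$. Let $V_{[\mu]}^f$ be the Ara–Rangaswamy simple left $L_K(E)$-module described in the context. Then $\mathrm{End}_{L_K(E)}(V_{[\mu]}^f)\cong K'$.
   Context: A graph $E=(E^0,E^1,r,s)$ consists of a vertex set $E^0$, an edge set $E^1$ and range/source maps $r,s:E^1\to E^0$. For a field $F$, the Leavitt path algebra $L_F(E)$ is the free associative $F$-algebra generated by $E^0\cup E^1\cup\{e^*:e\in E^1\}$ subject to: (V) $vv'=\delta_{v,v'}v$ for $v,v'\in E^0$; (E1) $s(e)e=er(e)=e$; (E2) $r(e)e^*=e^*s(e)=e^*$; (CK1) $e^*f=\delta_{e,f}r(e)$ for $e,f\in E^1$; (CK2) $v=\sum_{s(e)=v}ee^*$ for every vertex $v$ emitting a finite nonzero number of edges. A finite path is $e_1\cdots e_n$ with $r(e_i)=s(e_{i+1})$ (vertices are paths of length 0); for a path $\gamma=e_1\cdots e_n$, $\gamma^*=e_n^*\cdots e_1^*$. A cycle is a closed path $e_1\cdots e_n$ ($s(e_1)=r(e_n)$) with $s(e_i)\neq s(e_j)$ for $i\ne j$; it is exclusive if it shares no vertex with any other cycle (other than its own rotations). An infinite path is $e_1e_2\cdots$ with $r(e_i)=s(e_{i+1})$; for $n\ge1$, $\tau_{>n}(e_1e_2\cdots)=e_{n+1}e_{n+2}\cdots$,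 $\tau_{>0}$ is the identity. Two infinite paths $\mu,\eta$ are tail-equivalent if $\tau_{>m}(\mu)=\tau_{>n}(\eta)$ for some $m,n\ge0$; $[\mu]$ is the class of $\mu$. $V_{[\mu]}$ is the vector space with basis $[\mu]$, a left $L_F(E)$-module via: $v\cdot\eta=\eta$ if $v=s(\eta)$, else $0$; $e\cdot\eta=e\eta$ if $r(e)=s(\eta)$, else $0$; $e^*\cdot\eta=\tau_{>1}(\eta)$ if $\eta=e\eta'$, else $0$. Construction of $V_{[\mu]}^f$: let $\bar x$ be the image of $x$ in the field $K'$; let $\sigma$ be the $K'$-algebra automorphism of $L_{K'}(E)$ fixing all vertices and all $e,e^*$ with $e\neq e_1$, and sending $e_1\mapsto \bar x e_1$, $e_1^*\mapsto \bar x^{-1}e_1^*$. The twisted module $V_{[\mu]}^\sigma$ is $V_{[\mu]}$ (over $L_{K'}(E)$) as a vector space with action $a\cdot m=\sigma(a)m$. $V_{[\mu]}^f$ is $V_{[\mu]}^\sigma$ regarded as an $L_K(E)$-module by restriction of scalars along $L_K(E)\subseteq L_{K'}(E)$; it is a simple $L_K(E)$-module. *)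

(* Defs.v *)
From HB Require Import structures.
From mathcomp Require Import all_boot all_order ssralg poly polydiv.
From mathcomp Require Import qpoly.
From Stdlib Require List.
Set Implicit Arguments. Unset Strict Implicit. Unset Printing Implicit Defensive.
Import GRing.Theory.
Local Open Scope ring_scope.

Section Graph.
Variables (V Ed : eqType) (s r : Ed -> V).

Definition is_fpath (p : seq Ed) : Prop :=
  match p with [::] => True | e :: p' => path (fun a b => r a == s b) e p' end.

Definition is_cycle (c : seq Ed) : Prop :=
  match c with
  | [::] => False
  | e :: c' => [/\ is_fpath c, s e = r (last e c') & uniq (map s c)]
  end.

Definition cycle_verts (c : seq Ed) : seq V := map s c.

Definition exclusive_cycle (c : seq Ed) : Prop :=
  is_cycle c /\
  forall d, is_cycle d ->
    (exists v, v \in cycle_verts d /\ v \in cycle_verts c) ->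
    exists k, d = rot k c.

Definition is_ipath (eta : nat -> Ed) : Prop := forall i, r (eta i) = s (eta i.+1).

Definition tail_equiv (mu eta : nat -> Ed) : Prop :=
  exists m n : nat, forall k : nat, mu (m + k)%N = eta (n + k)%N.

Definition cyc_inf (e1 : Ed) (c' : seq Ed) : nat -> Ed :=
  fun i => nth e1 (e1 :: c') (i %% size (e1 :: c')).

Section Class.
Variable mu : nat -> Ed.

Definition Cls : Type := {eta : nat -> Ed | is_ipath eta /\ tail_equiv eta mu}.

Lemma ctail_proof (eta : Cls) :
  is_ipath (fun i => sval eta i.+1) /\ tail_equiv (fun i => sval eta i.+1) mu.
Proof.
case: eta => eta [Hp [m [n Hmn]]] /=; split; first by move=> i; exact: Hp.
exists m, n.+1 => k /=. rewrite addSn -!addnS; exact: Hmn.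
Qed.

Definition ctail (eta : Cls) : Cls := exist _ _ (ctail_proof eta).

Lemma ccons_proof (e : Ed) (eta : Cls) (h : r e = s (sval eta 0)) :
  is_ipath (fun i => if i is j.+1 then sval eta j else e) /\
  tail_equiv (fun i => if i is j.+1 then sval eta j else e) mu.
Proof.
case: eta h => eta [Hp [m [n Hmn]]] /= h; split.
  by case=> [|i] //=; exact: Hp.
by exists m.+1, n => k; rewrite addSn Hmn.
Qed.

Definition ccons (e : Ed) (eta : Cls) (h : r e = s (sval eta 0)) : Cls :=
  exist _ _ (ccons_proof h).
End Class.

Section Module.
Variables (K : fieldType) (f : {poly K}) (e1 : Ed) (c' : seq Ed).

(* K' = K[x]/(f) (= K[x,x^-1]/(f) since f(0) = 1), via the monic associate of f *)
Definition Kp := {poly %/ ((lead_coef f)^-1 *: f)}.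
Definition xbar : Kp := qpolyX ((lead_coef f)^-1 *: f).

Definition mu := cyc_inf e1 c'.
Definition Fun := Cls mu -> Kp.

(* finite support: elements of V_[mu] (K'-span of the basis [mu]) *)
Definition fin_supp (F : Fun) : Prop :=
  exists l : seq (Cls mu), forall eta, F eta != 0 -> List.In eta l.

Definition VMod : Type := {F : Fun | fin_supp F}.

(* action of the generators on V_[mu]^sigma, sigma(e1) = xbar e1, sigma(e1^* ) = xbar^-1 e1^* *)
Definition wE (e : Ed) : Kp := if e == e1 then xbar else 1.
Definition wG (e : Ed) : Kp := if e == e1 then xbar^-1 else 1.

Definition actK (k : K) (F : Fun) : Fun := fun eta => k%:A * F eta.
Definition actAdd (F G : Fun) : Fun := fun eta => F eta + G eta.
Definition actV (v : V) (F : Fun) : Fun :=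
  fun eta => if s (sval eta 0) == v then F eta else 0.
Definition actE (e : Ed) (F : Fun) : Fun :=
  fun eta => if sval eta 0 == e then wE e * F (ctail eta) else 0.
Definition actG (e : Ed) (F : Fun) : Fun :=
  fun eta => match r e =P s (sval eta 0) with
             | ReflectT h => wG e * F (ccons h)
             | ReflectF _ => 0
             end.

(* phi commutes with a (partial) operation on V_[mu]; the operations preserve
   finite support, so this is ordinary commutation *)
Definition commutes (op : Fun -> Fun) (phi : VMod -> VMod) : Prop :=
  forall m m' : VMod, sval m' = op (sval m) -> sval (phi m') = op (sval (phi m)).

Definition is_endo (phi : VMod -> VMod) : Prop :=
  [/\ (forall m1 m2 m3 : VMod, sval m3 = actAdd (sval m1) (sval m2) ->
          sval (phi m3) = actAdd (sval (phi m1)) (sval (phi m2))),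
      (forall k, commutes (actK k) phi),
      (forall v, commutes (actV v) phi),
      (forall e, commutes (actE e) phi) &
      (forall e, commutes (actG e) phi)].

Definition End_ring_iso (Phi : Kp -> VMod -> VMod) : Prop :=
  (forall a, is_endo (Phi a)) /\
  (forall a b m, sval (Phi (a + b) m) = actAdd (sval (Phi a m)) (sval (Phi b m))) /\
  (forall a b m, Phi (a * b) m = Phi a (Phi b m)) /\
  (forall m, Phi 1 m = m) /\
  (forall a b, (forall m, Phi a m = Phi b m) -> a = b) /\
  (forall phi, is_endo phi -> exists a, forall m, phi m = Phi a m).
End Module.
End Graph.

(* Main.v *)
Require Import Defs.
From HB Require Import structures.
From mathcomp Require Import all_boot all_order ssralg poly polydiv qpoly.
From Stdlib Require Import FunctionalExtensionality ProofIrrelevance ClassicalEpsilon.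
From Stdlib Require List.
Import GRing.Theory. Local Open Scope ring_scope.

Lemma xbar_unit (K : fieldType) (f : {poly K}) :
  (1 < size f)%N -> f`_0 = 1 -> xbar f \is a GRing.unit.
Proof.
move=> sf f0.
set h := (lead_coef f)^-1 *: f.
have fn0 : f != 0 by rewrite -size_poly_gt0 (ltn_trans _ sf).
have lf0 : lead_coef f != 0 by rewrite lead_coef_eq0.
have hmon : h \is monic by rewrite monicE lead_coefZ mulVf.
have sh : size h = size f by rewrite size_scale // invr_eq0.
have mh : mk_monic h = h by rewrite /mk_monic sh sf hmon.
have cop : coprimep (mk_monic h) (xbar f).
  rewrite /xbar /qpolyX /in_qpoly /=.
  rewrite mh -Pdiv.IdomainMonic.modpE // coprimep_modr.
  rewrite -[X in coprimep _ X]subr0 -polyC0 coprimep_XsubC /root horner_coef0.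
  by rewrite coefZ f0 mulr1 invr_eq0.
apply/unitrPr; exists (qpoly_inv (xbar f)).
exact: qpoly_mulzV.
Qed.

Section S.
Variables (V Ed : eqType) (s r : Ed -> V) (K : fieldType) (e1 : Ed) (c' : seq Ed) (f : {poly K}).
Local Notation Cl := (Cls s r (mu e1 c')).
Local Notation FF := (Fun s r f e1 c').
Local Notation VM := (VMod s r f e1 c').
Local Notation KP := (Kp f).

Lemma cls_eq (x y : Cl) : (forall i, sval x i = sval y i) -> x = y.
Proof.
case: x y => [x px] [y py] /= H.
have E : x = y by apply: functional_extensionality.
subst y; f_equal; apply: proof_irrelevance.
Qed.

Lemma vm_eq (x y : VM) : (forall i, sval x i = sval y i) -> x = y.
Proof.
case: x y => [x px] [y py] /= H.
have E : x = y by apply: functional_extensionality.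
subst y; f_equal; apply: proof_irrelevance.
Qed.

Lemma ipathP (x : Cl) i : r (sval x i) = s (sval x i.+1).
Proof. exact: (proj1 (proj2_sig x)). Qed.

Definition dl (z : Cl) (b : KP) : FF :=
  fun x => if excluded_middle_informative (x = z) then b else 0.

Lemma dlE z b : dl z b z = b.
Proof. by rewrite /dl; case: excluded_middle_informative. Qed.
Lemma dlN z b x : x <> z -> dl z b x = 0.
Proof. by rewrite /dl; case: excluded_middle_informative. Qed.

Arguments dlN {z b x}.

Lemma fs_dl z b : fin_supp (dl z b).
Proof.
exists [:: z] => x; rewrite /dl; case: excluded_middle_informative => [E|].
  by move=> ?; left. by move=> ? /=; rewrite eqxx.
Qed.

Lemma fs_add (F G : FF) : fin_supp F -> fin_supp G -> fin_supp (actAdd F G).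
Proof.
move=> [l1 H1] [l2 H2]; exists (l1 ++ l2) => x Hx; apply: List.in_or_app.
have [F0|/H1] := eqVneq (F x) 0; last by left.
have [G0|/H2] := eqVneq (G x) 0; last by right.
by move: Hx; rewrite /actAdd F0 G0 addr0 eqxx.
Qed.

Lemma fs_K k (F : FF) : fin_supp F -> fin_supp (actK k F).
Proof.
move=> [l H]; exists l => x Hx; apply: H; move: Hx; apply: contra_neq => E.
by rewrite /actK E mulr0.
Qed.

Lemma fs_mul (a : KP) (F : FF) : fin_supp F -> fin_supp (fun x => a * F x).
Proof.
move=> [l H]; exists l => x Hx; apply: H; move: Hx; apply: contra_neq => E.
by rewrite E mulr0.
Qed.

Lemma fs_E e (F : FF) : fin_supp F -> fin_supp (actE e F).
Proof.
move=> [l H].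
pose g (z : Cl) : Cl := match r e =P s (sval z 0) with
   | ReflectT h => ccons h | ReflectF _ => z end.
exists (map g l) => x Hx; apply/List.in_map_iff; exists (ctail x); split; last first.
  apply: H; move: Hx; apply: contra_neq => E; rewrite /actE E mulr0; by case: ifP.
move: Hx; rewrite /actE; case: (sval x 0 =P e) => [x0 _|]; last by rewrite eqxx.
rewrite /g; case: (r e =P _) => [h|]; last first.
  by case; rewrite -x0 ipathP.
by apply: cls_eq => -[|i] //=.
Qed.

Lemma fs_G e (F : FF) : fin_supp F -> fin_supp (actG e F).
Proof.
move=> [l H].
exists (map (fun z : Cl => ctail z) l) => x; rewrite /actG; case: (r e =P _) => [h|]; last by rewrite eqxx.
move=> Hx; apply/List.in_map_iff; exists (ccons h); split.
  by apply: cls_eq.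
by apply: H; move: Hx; apply: contra_neq => E; rewrite E mulr0.
Qed.


Definition liftE e (m : VM) : VM := exist _ (actE e (sval m)) (fs_E e (sval m) (proj2_sig m)).
Definition liftG e (m : VM) : VM := exist _ (actG e (sval m)) (fs_G e (sval m) (proj2_sig m)).
Definition liftK k (m : VM) : VM := exist _ (actK k (sval m)) (fs_K k (sval m) (proj2_sig m)).
Definition vadd (m1 m2 : VM) : VM :=
  exist _ (actAdd (sval m1) (sval m2)) (fs_add (sval m1) (sval m2) (proj2_sig m1) (proj2_sig m2)).
Definition delta z b : VM := exist _ (dl z b) (fs_dl z b).
Definition PhiM (a : KP) (m : VM) : VM :=
  exist _ (fun x => a * sval m x) (fs_mul a (sval m) (proj2_sig m)).

Fixpoint pref (N : nat) (z : Cl) : seq Ed :=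
  if N is N'.+1 then sval z 0 :: pref N' (ctail z) else [::].
Fixpoint ctailn (N : nat) (z : Cl) : Cl :=
  if N is N'.+1 then ctailn N' (ctail z) else z.
Definition opP (p : seq Ed) (F : FF) : FF := foldr (fun e G => actE e G) F p.
Definition opPs (p : seq Ed) (F : FF) : FF := foldl (fun G e => actG e G) F p.
Definition liftP (p : seq Ed) (m : VM) : VM := foldr liftE m p.
Definition liftPs (p : seq Ed) (m : VM) : VM := foldl (fun m e => liftG e m) m p.
Definition wP (p : seq Ed) : KP := \prod_(e <- p) wE f e1 e.
Definition wPs (p : seq Ed) : KP := \prod_(e <- p) wG f e1 e.

Lemma liftPE p m : sval (liftP p m) = opP p (sval m).
Proof. by elim: p => //= e p ->. Qed.
Lemma liftPsE p m : sval (liftPs p m) = opPs p (sval m).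
Proof. by elim: p m => //= e p IH m; rewrite IH. Qed.

Lemma actE_dl z b : actE (sval z 0) (dl (ctail z) b) = dl z (wE f e1 (sval z 0) * b).
Proof.
apply: functional_extensionality => x; rewrite /actE.
case: (sval x 0 =P sval z 0) => [E|N].
  case: (excluded_middle_informative (x = z)) => [->|xz]; first by rewrite !dlE.
  rewrite (dlN xz) dlN ?mulr0 // => E'; apply: xz; apply: cls_eq => -[|i] //.
  by have := congr1 (fun y : Cl => sval y i) E'.
rewrite dlN // => xz; apply: N; by rewrite xz.
Qed.

Lemma actG_dl z b : actG (sval z 0) (dl z b) = dl (ctail z) (wG f e1 (sval z 0) * b).
Proof.
apply: functional_extensionality => x; rewrite /actG.
case: (r (sval z 0) =P s (sval x 0)) => [h|N].
  case: (excluded_middle_informative (x = ctail z)) => [xz|xz].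
    subst x; rewrite dlE (_ : ccons h = z) ?dlE //.
    by apply: cls_eq => -[|i].
  rewrite (dlN xz) dlN ?mulr0 // => E'; apply: xz; rewrite -E'.
  by apply: cls_eq.
rewrite dlN // => xz; apply: N; rewrite xz; exact: ipathP.
Qed.

Lemma opP_dl N z b :
  opP (pref N z) (dl (ctailn N z) b) = dl z (wP (pref N z) * b).
Proof.
elim: N z b => [|N IH] z b /=; first by rewrite /wP big_nil mul1r.
by rewrite IH actE_dl /wP big_cons mulrA.
Qed.

Lemma opPs_dl N z b :
  opPs (pref N z) (dl z b) = dl (ctailn N z) (wPs (pref N z) * b).
Proof.
elim: N z b => [|N IH] z b /=; first by rewrite /wPs big_nil mul1r.
rewrite actG_dl IH /wPs big_cons; congr dl.
by rewrite mulrCA mulrA.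
Qed.

Lemma opP_supp p F x : opP p F x != 0 -> pref (size p) x = p.
Proof.
elim: p x => [|e p IH] x //=.
rewrite /actE; case: (sval x 0 =P e) => [E|]; last by rewrite eqxx.
rewrite E => H; congr cons; apply: IH; move: H; apply: contra_neq => ->.
by rewrite mulr0.
Qed.

Lemma pref_nth N z i : (i < N)%N -> nth e1 (pref N z) i = sval z i.
Proof. by elim: N z i => [|N IH] z [|i] //= /IH ->. Qed.

Lemma size_pref N z : size (pref N z) = N.
Proof. by elim: N z => [|N IH] z //=; rewrite IH. Qed.

Lemma ctailn_val N z i : sval (ctailn N z) i = sval z (N + i).
Proof. by elim: N z => [|N IH] z //=; rewrite IH. Qed.

Section Cyc.
Hypothesis Hc : is_cycle s r (e1 :: c').
Hypothesis sf : (1 < size f)%N.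
Hypothesis f0 : f`_0 = 1.
Local Notation cl := (e1 :: c').
Local Notation hh := ((lead_coef f)^-1 *: f).

Lemma mu_ipath : is_ipath s r (mu e1 c').
Proof.
case: Hc => /= Hp Hl Hu i; rewrite /mu /cyc_inf.
set m0 := size cl.
have lt : (i %% m0 < m0)%N by rewrite ltn_mod.
have E : (i.+1 %% m0 = (i %% m0).+1 %% m0)%N by rewrite -addn1 -modnDml addn1.
rewrite E.
case: (ltngtP (i %% m0).+1 m0) => [h|h|h].
- rewrite (modn_small h).
  have H1 : (i %% m0 < size c')%N by rewrite -ltnS.
  by move/pathP: Hp => /(_ e1 (i %% m0)%N H1) /eqP.
- by move: h; rewrite ltnNge lt.
- rewrite h modnn.
  have -> : (i %% m0 = size c')%N by move: h => /eqP; rewrite eqSS => /eqP.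
  have := nth_last e1 (e1 :: c'); rewrite /= => ->.
  by rewrite Hl.
Qed.

Definition muC : Cl := exist _ (mu e1 c')
  (conj mu_ipath (ex_intro _ 0%N (ex_intro _ 0%N (fun k => erefl)))).

Lemma pref_mu : pref (size cl) muC = cl.
Proof.
apply: (@eq_from_nth _ e1); first by rewrite size_pref.
move=> i; rewrite size_pref => hi; rewrite pref_nth //= /mu /cyc_inf modn_small //.
Qed.

Lemma ctailn_mu : ctailn (size cl) muC = muC.
Proof. by apply: cls_eq => i; rewrite ctailn_val /= /mu /cyc_inf modnDl. Qed.

Lemma wP_cl : wP cl = xbar f.
Proof.
rewrite /wP big_cons /wE eqxx big1_seq ?mulr1 // => e /andP [_ he].
case: Hc => _ _ /= /andP [hn _].
rewrite ifN //; apply/eqP => E; move: hn; by rewrite -E map_f.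
Qed.

Lemma wE_unit e : wE f e1 e \is a GRing.unit.
Proof. by rewrite /wE; case: ifP => _; [exact: xbar_unit | exact: unitr1]. Qed.
Lemma wG_unit e : wG f e1 e \is a GRing.unit.
Proof. by rewrite /wG; case: ifP => _; [rewrite unitrV; exact: xbar_unit | exact: unitr1]. Qed.

Lemma prod_unit (F : Ed -> KP) p : (forall e, F e \is a GRing.unit) ->
  \prod_(e <- p) F e \is a GRing.unit.
Proof.
move=> H; elim: p => [|e p IH]; first by rewrite big_nil unitr1.
by rewrite big_cons unitrM H IH.
Qed.

Lemma wEG e : wE f e1 e * wG f e1 e = 1.
Proof.
rewrite /wE /wG; case: ifP => _; last by rewrite mulr1.
by rewrite mulrV // xbar_unit.
Qed.

Lemma wPPs p : wP p * wPs p = 1.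
Proof. by rewrite /wP /wPs -big_split /=; apply: big1 => e _; exact: wEG. Qed.

Lemma C_dl b : opP cl (dl muC b) = dl muC (xbar f * b).
Proof. by have := opP_dl (size cl) muC b; rewrite pref_mu ctailn_mu wP_cl. Qed.

Section Endo.
Variable phi : VM -> VM.
Hypothesis Hphi : is_endo phi.

Lemma phiE e m : sval (phi (liftE e m)) = actE e (sval (phi m)).
Proof. by case: Hphi => _ _ _ H _; exact: H. Qed.
Lemma phiG e m : sval (phi (liftG e m)) = actG e (sval (phi m)).
Proof. by case: Hphi => _ _ _ _ H; exact: H. Qed.
Lemma phiK k m : sval (phi (liftK k m)) = actK k (sval (phi m)).
Proof. by case: Hphi => _ H _ _ _; exact: H. Qed.
Lemma phiAdd m1 m2 : sval (phi (vadd m1 m2)) = actAdd (sval (phi m1)) (sval (phi m2)).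
Proof. by case: Hphi => H _ _ _ _; exact: H. Qed.
Lemma phiP p m : sval (phi (liftP p m)) = opP p (sval (phi m)).
Proof. by elim: p => //= e p IH; rewrite phiE IH. Qed.
Lemma phiPs p m : sval (phi (liftPs p m)) = opPs p (sval (phi m)).
Proof. by elim: p m => //= e p IH m; rewrite IH phiG. Qed.
Lemma phi0 m : (forall x, sval m x = 0) -> forall x, sval (phi m) x = 0.
Proof.
move=> Hm x; case: Hphi => H _ _ _ _.
have E0 : sval m = actAdd (sval m) (sval m).
  by apply: functional_extensionality => y; rewrite /actAdd Hm addr0.
have E := H m m m E0.
have := congr1 (fun t => t x - sval (phi m) x) E; rewrite /actAdd /= subrr addrK.
by move=> ->.
Qed.

Let Dm := delta muC 1.
Let G := sval (phi Dm).
Let a := G muC.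

Lemma step1 N : G = opP (pref N muC) (opPs (pref N muC) G).
Proof.
have EDm : Dm = liftP (pref N muC) (liftPs (pref N muC) Dm).
  apply: vm_eq => x; rewrite liftPE liftPsE /= opPs_dl opP_dl.
  by rewrite mulr1 wPPs.
by rewrite /G {1}EDm phiP phiPs.
Qed.

Lemma step2 x : G x != 0 -> x = muC.
Proof.
move=> Hx; apply: cls_eq => i.
rewrite (step1 i.+1) in Hx.
have := opP_supp _ _ _ Hx; rewrite size_pref => Hp.
by rewrite -(@pref_nth i.+1 x i) // Hp pref_nth.
Qed.

Lemma GE : G = dl muC a.
Proof.
apply: functional_extensionality => x.
case: (excluded_middle_informative (x = muC)) => [->|xm]; first by rewrite dlE.
rewrite dlN //; have [//|/step2] := eqVneq (G x) 0; by [].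
Qed.

Lemma step4 (q : {poly K}) :
  sval (phi (delta muC (in_qpoly hh q))) = dl muC (in_qpoly hh q * a).
Proof.
elim/poly_ind: q => [|q c IH].
  rewrite in_qpoly0 mul0r; apply: functional_extensionality => x.
  rewrite phi0 /dl; last by move=> y /=; rewrite /dl; case: excluded_middle_informative.
  by case: excluded_middle_informative.
set b := in_qpoly hh q in IH *.
have Eq : delta muC (in_qpoly hh (q * 'X + c%:P)) =
          vadd (liftP cl (delta muC b)) (liftK c Dm).
  apply: vm_eq => x; change (dl muC (in_qpoly hh (q * 'X + c%:P)) x = actAdd (sval (liftP cl (delta muC b))) (actK c (dl muC 1)) x).
  rewrite liftPE (_ : sval (delta muC b) = dl muC b) // C_dl /actAdd /actK /dl.
  case: excluded_middle_informative => ?; last by rewrite mulr0 addr0.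
  rewrite in_qpolyD in_qpolyM -alg_polyC in_qpolyZ in_qpoly1 mulr1.
  by rewrite mulrC.
rewrite Eq phiAdd phiP IH C_dl phiK -/G GE.
apply: functional_extensionality => x; rewrite /actAdd /actK /dl.
case: excluded_middle_informative => ?; last by rewrite mulr0 addr0.
rewrite /= in_qpolyD in_qpolyM -alg_polyC in_qpolyZ in_qpoly1 mulrDl.
by rewrite mulrA (mulrC (xbar f)).
Qed.

Lemma step5 (b : KP) : sval (phi (delta muC b)) = dl muC (b * a).
Proof.
have -> : b = in_qpoly hh (val b).
  by apply/val_inj/esym; exact: (in_qpoly_small (size_mk_monic b)).
exact: step4.
Qed.

Lemma step6 z b : sval (phi (delta z b)) = dl z (b * a).
Proof.
case: (proj2 (proj2_sig z)) => M [N HMN].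
have Ect : ctailn N muC = ctailn M z.
  by apply: cls_eq => i; rewrite !ctailn_val HMN.
set P := pref M z; set Q := pref N muC.
have wu : wP P * wPs Q \is a GRing.unit.
  by rewrite unitrM !prod_unit //; [exact: wG_unit | exact: wE_unit].
set b' := (wP P * wPs Q)^-1 * b.
have Edz : delta z b = liftP P (liftPs Q (delta muC b')).
  apply: vm_eq => x; rewrite liftPE liftPsE (_ : sval (delta muC b') = dl muC b') //.
  rewrite opPs_dl -/Q Ect opP_dl -/P /= /b' mulrA mulVKr //.
rewrite Edz phiP phiPs step5 opPs_dl -/Q Ect opP_dl -/P.
by rewrite /b' -(mulrA _ b a) mulrA mulVKr.
Qed.

Lemma step7 l m : (forall x, sval m x != 0 -> List.In x l) ->
  sval (phi m) = fun x => a * sval m x.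
Proof.
elim: l m => [|z l IH] m Hm.
  have Hm0 : forall y, sval m y = 0.
    move=> y; case: (eqVneq (sval m y) 0) => [//|/Hm] [].
  by apply: functional_extensionality => x; rewrite phi0 // Hm0 mulr0.
pose F1 : FF := fun x => if excluded_middle_informative (x = z) then 0 else sval m x.
have H1 : forall x, F1 x != 0 -> List.In x l.
  move=> x; rewrite /F1; case: excluded_middle_informative => [?|xz].
    by rewrite /= eqxx.
  by move=> /= /Hm [E|//]; case: xz.
pose m1 : VM := exist _ F1 (ex_intro _ l H1).
have Em : m = vadd m1 (delta z (sval m z)).
  apply: vm_eq => x; rewrite /= /actAdd /F1 /dl.
  case: excluded_middle_informative => [E|?] /=; last by rewrite addr0.
  by rewrite add0r E.
rewrite {1}Em phiAdd (IH m1 H1) step6.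
apply: functional_extensionality => x; rewrite /actAdd /= /F1 /dl.
case: excluded_middle_informative => [E|?] /=; last by rewrite addr0.
by rewrite mulr0 add0r E mulrC.
Qed.

Lemma step8 m : phi m = PhiM a m.
Proof.
case: (proj2_sig m) => l Hl; apply: vm_eq => x.
by rewrite (step7 _ _ Hl).
Qed.

Lemma surj : exists a, forall m, phi m = PhiM a m.
Proof. exists a; exact: step8. Qed.

End Endo.

Lemma iso : End_ring_iso (s := s) (r := r) (f := f) (e1 := e1) (c' := c') PhiM.
Proof.
split; [|split; [|split; [|split; [|split]]]].
- move=> a; split.
  + move=> m1 m2 m3 /= E; rewrite E; apply: functional_extensionality => x.
    by rewrite /actAdd mulrDr.
  + move=> k m m' /= E; rewrite E; apply: functional_extensionality => x.
    by rewrite /actK mulrCA.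
  + move=> v m m' /= E; rewrite E; apply: functional_extensionality => x.
    by rewrite /actV; case: ifP => _; rewrite ?mulr0.
  + move=> e m m' /= E; rewrite E; apply: functional_extensionality => x.
    by rewrite /actE; case: ifP => _; rewrite ?mulr0 // mulrCA.
  + move=> e m m' /= E; rewrite E; apply: functional_extensionality => x.
    by rewrite /actG; case: (r e =P _) => h; rewrite ?mulr0 // mulrCA.
- move=> a b m; apply: functional_extensionality => x.
  by rewrite /= /actAdd mulrDl.
- by move=> a b m; apply: vm_eq => x /=; rewrite mulrA.
- by move=> m; apply: vm_eq => x /=; rewrite mul1r.
- move=> a b H; have := congr1 (fun m => sval m muC) (H (delta muC 1)).
  by rewrite /= dlE !mulr1.
- move=> phi Hp; exact: surj Hp.
Qed.

End Cyc.
End S.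

Theorem lemma2p2 (V Ed : eqType) (s r : Ed -> V) (K : fieldType)
    (e1 : Ed) (c' : seq Ed) (f : {poly K}) :
  exclusive_cycle s r (e1 :: c') ->
  (1 < size f)%N -> f`_0 = 1 -> irreducible_poly f ->
  exists Phi : Kp f -> VMod s r f e1 c' -> VMod s r f e1 c',
    End_ring_iso (s := s) (r := r) (f := f) (e1 := e1) (c' := c') Phi.
Proof.
move=> [Hc _] sf f0 _.
exists (@PhiM V Ed s r K e1 c' f).
exact: iso.
Qed.
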